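(* Let $M \in \{0,1\}^{n \times n}$ be a $d$-mixed-free binary matrix. Then $M$ admits a rectangle-decomposition $\mathcal{R}$ with $|\mathcal{R}| \in 2^{\mathcal{O}(d)} \cdot n$.
   Context: A $k$-division of $M$ is a pair $(\mathcal{R},\mathscr{C})$ of partitions of $[n]$ each into exactly $k$ contiguous non-empty intervals; its cells are the submatrices with rows in one interval of $\mathcal{R}$ and columns in one interval of $\mathscr{C}$. A matrix is mixed if it is neither horizontal (all its rows are equal) nor vertical (all its columns are equal). $M$ is $d$-mixed-free if it admits no $d$-division all of whose cells are mixed. A $1$-rectangle of $M$ is a contiguous submatrix all of whose entries are $1$; a rectangle-decomposition of $M$ is a collection of pairwise disjoint $1$-rectangles whose union is exactly the set of positions of $1$-entries of $M$. *)

(* Defs.v *)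
From mathcomp Require Import all_boot all_algebra.
Set Implicit Arguments. Unset Strict Implicit. Unset Printing Implicit Defensive.

(* Indices of [n] are 0..n-1 (the ordinals 'I_n).  A partition of [n] into
   exactly k contiguous non-empty intervals is encoded by its boundary sequence
   0 = s_0 < s_1 < ... < s_k = n; the i-th interval (i < k) is [s_i, s_{i+1}). *)
Definition interval_partition (n k : nat) (s : seq nat) : bool :=
  [&& size s == k.+1, sorted ltn s, head 0 s == 0 & last 0 s == n].

Definition in_block (a b c e : nat) n (x y : 'I_n) : bool :=
  (a <= x < b) && (c <= y < e).

Definition horizontal n (M : 'M[bool]_n) (a b c e : nat) : bool :=
  [forall x : 'I_n, forall x' : 'I_n, forall y : 'I_n,
     (in_block a b c e x y && in_block a b c e x' y) ==> (M x y == M x' y)].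

Definition vertical n (M : 'M[bool]_n) (a b c e : nat) : bool :=
  [forall x : 'I_n, forall y : 'I_n, forall y' : 'I_n,
     (in_block a b c e x y && in_block a b c e x y') ==> (M x y == M x y')].

Definition mixed n (M : 'M[bool]_n) (a b c e : nat) : bool :=
  ~~ horizontal M a b c e && ~~ vertical M a b c e.

Definition has_mixed_division n (M : 'M[bool]_n) (d : nat) : Prop :=
  exists (R C : seq nat),
    [/\ interval_partition n d R, interval_partition n d C &
        forall i j, i < d -> j < d ->
          mixed M (nth 0 R i) (nth 0 R i.+1) (nth 0 C j) (nth 0 C j.+1)].

Definition mixed_free n (M : 'M[bool]_n) (d : nat) : Prop :=
  ~ has_mixed_division M d.

(* A rectangle ((a,b),(c,e)) is the contiguous non-empty block of positions
   with rows a <= x < b and columns c <= y < e (a < b <= n, c < e <= n). *)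
Definition rect := ((nat * nat) * (nat * nat))%type.

Definition rect_valid (n : nat) (r : rect) : bool :=
  let: ((a, b), (c, e)) := r in [&& a < b <= n & c < e <= n].

Definition in_rect n (r : rect) (x y : 'I_n) : bool :=
  let: ((a, b), (c, e)) := r in in_block a b c e x y.

Definition one_rect n (M : 'M[bool]_n) (r : rect) : Prop :=
  rect_valid n r /\ forall x y : 'I_n, in_rect r x y -> M x y = true.

Definition rect_decomposition n (M : 'M[bool]_n) (Rs : seq rect) : Prop :=
  [/\ uniq Rs,
      forall r, r \in Rs -> one_rect M r,
      forall r r', r \in Rs -> r' \in Rs -> r != r' ->
        forall x y : 'I_n, ~~ (in_rect r x y && in_rect r' x y) &
      forall x y : 'I_n, M x y = true <-> exists2 r, r \in Rs & in_rect r x y].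

(* Main.v *)
Require Import Defs.
From mathcomp Require Import all_boot all_algebra zify.
Set Implicit Arguments. Unset Strict Implicit. Unset Printing Implicit Defensive.

Definition hits (P : nat -> nat -> bool) x1 x2 y1 y2 : Prop :=
  exists x y, [/\ x1 <= x < x2, y1 <= y < y2 & P x y].

Definition grid k l (P : nat -> nat -> bool) : Prop :=
  exists xs ys : seq nat, [/\ size xs = k.+1, size ys = l.+1 &
    forall i j, i < k -> j < l ->
      hits P (nth 0 xs i) (nth 0 xs i.+1) (nth 0 ys j) (nth 0 ys j.+1)].

Definition trP (P : nat -> nat -> bool) := fun x y => P y x.

Lemma grid_tr k l P : grid k l P -> grid l k (trP P).
Proof.
case=> xs [ys] [sx sy H]; exists ys, xs; split=> // i j ilt jlt.
have [x [y [h1 h2 h3]]] := H j i jlt ilt.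
by exists y, x.
Qed.

Lemma grid_lift k l (P P' : nat -> nat -> bool) (u v : nat -> nat) :
  {homo u : a b / a <= b} -> {homo v : a b / a <= b} ->
  (forall x y, P x y -> exists x' y',
      [/\ u x <= x' < u x.+1, v y <= y' < v y.+1 & P' x' y']) ->
  grid k l P -> grid k l P'.
Proof.
move=> hu hv H [xs [ys [sx sy G]]].
exists (map u xs), (map v ys); rewrite !size_map; split=> // i j ilt jlt.
have [x [y [/andP[a1 a2] /andP[b1 b2] p]]] := G i j ilt jlt.
have [x' [y' [/andP[c1 c2] /andP[d1 d2] p']]] := H x y p.
rewrite !(nth_map 0) ?sx ?sy; try lia.
exists x', y'; split=> //; apply/andP; split.
- exact: leq_trans (hu _ _ a1) c1.
- exact: leq_trans c2 (hu _ _ a2).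
- exact: leq_trans (hv _ _ b1) d1.
- exact: leq_trans d2 (hv _ _ b2).
Qed.

Lemma grid_sub k l (P P' : nat -> nat -> bool) :
  (forall x y, P x y -> P' x y) -> grid k l P -> grid k l P'.
Proof.
move=> H; apply: (grid_lift (u := id) (v := id)) => // x y p.
by exists x, y; split; rewrite /= ?leqnn ?ltnSn //; apply: H.
Qed.

Lemma grid_app k l (P P' : nat -> nat -> bool) h Y :
  0 < l ->
  (forall x y, P' x y -> [/\ y < h, P x y & exists y', [/\ h <= y', y' < Y & P x y']]) ->
  grid k l P' -> grid k l.+1 P.
Proof.
move=> l0 H [xs [ys [sx sy G]]].
exists xs, (take l ys ++ [:: h; Y]); split=> //.
  rewrite size_cat size_take sy ltnSn /=; lia.
move=> i j ilt jlt.
have stl : size (take l ys) = l by rewrite size_take sy ltnSn.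
have [jl|jl] := ltnP j.+1 l.
- have jl' : j < l by lia.
  rewrite !nth_cat stl jl jl' !nth_take //.
  have [x [y [h1 h2 h3]]] := G i j ilt jl'.
  exists x, y; split=> //; by case: (H x y h3).
have [jl1|jl1] := ltnP j l.
- have ej : j = l.-1 by lia.
  have e1 : (j.+1 < l) = false by lia.
  have e2 : j.+1 - l = 0 by lia.
  rewrite !nth_cat stl jl1 e1 e2 /= nth_take //.
  have [x [y [h1 /andP[h2 _] h3]]] := G i j ilt jl1.
  case: (H x y h3) => yh py _.
  by exists x, y; split=> //; apply/andP.
- have ej : j = l by lia.
  subst j; rewrite !nth_cat stl ltnn.
  have e1 : (l.+1 < l) = false by lia.
  rewrite e1 subnn subSnn /=.
  have [x [y [h1 h2 h3]]] := G i l.-1 ilt ltac:(lia).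
  case: (H x y h3) => _ _ [y' [a b c]].
  by exists x, y'; split=> //; apply/andP.
Qed.

Lemma grid_pre k l (P P' : nat -> nat -> bool) h :
  0 < l ->
  (forall x y, P' x y -> [/\ h <= y, P x y & exists y', y' < h /\ P x y']) ->
  grid k l P' -> grid k l.+1 P.
Proof.
move=> l0 H [xs [ys [sx sy G]]].
exists xs, (0 :: h :: behead ys); split=> //.
  by rewrite /= size_behead sy.
move=> i j ilt jlt.
case: j jlt => [|j] jlt /=.
- have [x [y [h1 h2 h3]]] := G i 0 ilt ltac:(lia).
  case: (H x y h3) => _ _ [y' [a b]].
  by exists x, y'; split=> //; apply/andP.
case: j jlt => [|j] jlt /=.
- have [x [y [h1 /andP[_ h2] h3]]] := G i 0 ilt ltac:(lia).
  case: (H x y h3) => hy py _.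
  exists x, y; split=> //; apply/andP; split=> //.
  by case: ys sy h2 {G} => //= a ys' _; rewrite nth0.
- have [x [y [h1 h2 h3]]] := G i j.+1 ilt ltac:(lia).
  case: (H x y h3) => hy py _.
  exists x, y; split=> //.
  by case: ys sy h2 {G} => //= a ys' _.
Qed.

Definition rc (P : nat -> nat -> bool) x lo hi := \sum_(lo <= y < hi) (P x y : nat).
Definition nzr (P : nat -> nat -> bool) rb lo hi := \sum_(0 <= x < rb) (0 < rc P x lo hi : nat).

Lemma sum_count (b : nat -> bool) m n :
  \sum_(m <= x < n) (b x : nat) = count b (index_iota m n).
Proof. by rewrite -sum1_count [RHS]big_mkcond; apply: eq_bigr => i _; case: (b i). Qed.

Lemma sum_pos_ex (F : nat -> bool) m n :
  0 < \sum_(m <= y < n) (F y : nat) -> exists y, m <= y < n /\ F y.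
Proof.
case: (boolP (has F (index_iota m n))) => [/hasP [y yin Fy]|/hasPn H].
  by exists y; rewrite -mem_index_iota.
rewrite big1_seq // => y /andP[_ yin]; by rewrite (negbTE (H y yin)).
Qed.

Lemma sum_ex_pos (F : nat -> bool) m n y :
  m <= y < n -> F y -> 0 < \sum_(m <= y < n) (F y : nat).
Proof.
move=> /andP[a b] Fy.
rewrite (big_cat_nat (n:=y)) // ?(ltnW b) //= (big_ltn b) /= Fy; lia.
Qed.

Lemma sum_bool_le (F : nat -> bool) m n : \sum_(m <= y < n) (F y : nat) <= n - m.
Proof.
rewrite -[n - m]muln1 -sum_nat_const_nat; apply: leq_sum => i _; by case: (F i).
Qed.

Lemma rc_cond (P : nat -> nat -> bool) (C : nat -> bool) x lo hi :
  rc (fun x y => P x y && C x) x lo hi = if C x then rc P x lo hi else 0.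
Proof.
rewrite /rc; case: (C x).
  by apply: eq_bigr => i _; rewrite andbT.
by rewrite big1 // => i _; rewrite andbF.
Qed.

Lemma rc_split P x lo mid hi : lo <= mid <= hi ->
  rc P x lo hi = rc P x lo mid + rc P x mid hi.
Proof. by move=> /andP[a b]; rewrite /rc (big_cat_nat (n:=mid)). Qed.

Lemma grid_rows k (P : nat -> nat -> bool) rb lo hi :
  (forall x y, P x y -> lo <= y < hi) ->
  k <= nzr P rb lo hi -> grid k 1 P.
Proof.
move=> Pb.
rewrite /nzr sum_count.
set S := [seq x <- index_iota 0 rb | 0 < rc P x lo hi].
rewrite -size_filter -/S => kS.
have sS : sorted ltn S by apply: sorted_filter => //; [exact: ltn_trans | exact: iota_ltn_sorted].
exists (rcons (take k S) rb), [:: lo; hi]; split.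
- by rewrite size_rcons size_take; case: ltngtP kS => //; lia.
- by [].
move=> i j ik; rewrite ltnS leqn0 => /eqP -> /=.
have stk : size (take k S) = k by rewrite size_take; case: ltngtP kS => //; lia.
rewrite !nth_rcons stk ik nth_take //.
have iS : i < size S by lia.
have zin : nth 0 S i \in S by apply: mem_nth.
move: (zin); rewrite mem_filter mem_index_iota => /andP[rz /andP[_ zrb]].
have [y [yr Py]] := sum_pos_ex rz.
exists (nth 0 S i), y; split => //.
apply/andP; split => //.
have [h|h] := ltnP i.+1 k.
  rewrite nth_take //.
  have := sorted_ltn_nth ltn_trans 0 sS; move=> /(_ i i.+1); apply => //; rewrite inE; lia.
have -> : (i.+1 == k) by lia.
by [].
Qed.

Lemma halves_ineq T : 2 <= T ->
  3 * ((T./2) ^ 2 + (T - T./2) ^ 2) <= 2 * T ^ 2.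
Proof.
move=> T2.
have e := odd_double_half T.
set h := T./2 in e *.
have h1 : 1 <= h by rewrite /h; move: T2 {e}; case: T {h} => [|[|T]].
case: (odd T) e => /= e.
- have -> : T - h = h.+1 by lia.
  rewrite -e; nia.
- have -> : T - h = h by lia.
  rewrite -e; nia.
Qed.

Lemma half_facts n : n./2 + n./2 <= n <= n./2 + n./2 + 1.
Proof.
have e := odd_double_half n; rewrite -addnn in e.
by case: (odd n) e => /= e; lia.
Qed.

Lemma sq_half s : s ^ 2 <= 4 * (s - s./2) ^ 2.
Proof.
have h : s <= 2 * (s - s./2) by have := half_facts s; lia.
by rewrite -[4]/(2 ^ 2) -expnMn leq_exp2r.
Qed.

Lemma half_ceil_le s r : s <= r.*2 -> s - s./2 <= r.
Proof. rewrite -addnn; have := half_facts s; lia. Qed.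

Lemma cover_arith s u w : (0 < u + w -> s <= u + w) ->
  (0 < u + w : nat) <= (0 < (if w == 0 then u else 0)) + (0 < (if u == 0 then w else 0))
    + (0 < (if (0 < w) && (s <= u.*2) then u else 0))
    + (0 < (if (0 < u) && (s <= w.*2) then w else 0)).
Proof.
case: u => [|u]; case: w => [|w] //= h.
have := h isT => h'.
have [a|a] := leqP s (u.+1).*2; have [b|b] := leqP s (w.+1).*2; rewrite ?a ?b //=.
move: a b; rewrite -!addnn; lia.
Qed.

Lemma final_arith NL NR NX NY S S' A al be ta :
  NL * S <= 8 * A * al -> NR * S <= 8 * A * be ->
  NX * S' <= A * al -> NY * S' <= A * be -> S <= 4 * S' ->
  3 * (al + be) <= 2 * ta ->
  (NL + NR + NX + NY) * S <= 8 * A * ta.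
Proof.
move=> h1 h2 h3 h4 h5 h6.
have h7 : NX * S <= 4 * (A * al).
  apply: (leq_trans (leq_mul (leqnn NX) h5)); rewrite mulnCA leq_mul2l; by rewrite h3 orbT.
have h8 : NY * S <= 4 * (A * be).
  apply: (leq_trans (leq_mul (leqnn NY) h5)); rewrite mulnCA leq_mul2l; by rewrite h4 orbT.
have h9 : 3 * (A * (al + be)) <= 2 * (A * ta).
  by rewrite mulnCA [2 * _]mulnCA leq_mul2l h6 orbT.
rewrite !mulnDl; lia.
Qed.

Section W.
Variable k : nat.

Lemma rc_pos_le P x lo hi : rc P x lo hi <= hi - lo.
Proof. exact: sum_bool_le. Qed.

Lemma W_base lo hi rb s (P : nat -> nat -> bool) :
  (forall x y, P x y -> lo <= y < hi) ->
  (forall x, 0 < rc P x lo hi -> s <= rc P x lo hi) ->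
  ~ grid k 1 P ->
  nzr P rb lo hi * s ^ 2 <= k.-1 * (hi - lo) ^ 2.
Proof.
move=> Pb Ps ng.
have lt : nzr P rb lo hi < k.
  rewrite ltnNge; apply/negP => h; apply: ng; exact: grid_rows h.
case: (posnP (nzr P rb lo hi)) => [->|np]; first by [].
have [x [_ hx]] := sum_pos_ex np.
have := Ps x hx; have := rc_pos_le P x lo hi => a b.
have sl : s <= hi - lo by lia.
apply: leq_mul; first by lia.
by rewrite leq_exp2r.
Qed.

Lemma W_main l : 0 < l -> forall t lo hi rb s (P : nat -> nat -> bool),
  hi - lo <= t ->
  (forall x y, P x y -> lo <= y < hi) ->
  (forall x, 0 < rc P x lo hi -> s <= rc P x lo hi) ->
  2 ^ l.-1 <= s ->
  ~ grid k l P ->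
  nzr P rb lo hi * s ^ 2 <= (k.-1 * 8 ^ l.-1) * (hi - lo) ^ 2.
Proof.
elim: l => [//|l IHl] _.
case: l IHl => [_|l IHl].
  move=> t lo hi rb s P _ Pb Ps _ ng; rewrite expn0 muln1; exact: W_base.
have IHl' := IHl isT; clear IHl.
elim=> [|t IHt] lo hi rb s P ht Pb Ps s2 ng.
  have -> : hi - lo = 0 by lia.
  have -> : nzr P rb lo hi = 0.
    rewrite /nzr big1 // => x _.
    suff -> : (0 < rc P x lo hi) = false by [].
    apply/negbTE; rewrite -leqNgt; have := rc_pos_le P x lo hi; lia.
  by [].
have [T1|T2] := leqP (hi - lo) 1.
  have -> : nzr P rb lo hi = 0.
    rewrite /nzr big1 // => x _.
    suff -> : (0 < rc P x lo hi) = false by [].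
    apply/negP => hp.
    have := rc_pos_le P x lo hi; have := Ps x hp.
    have : 2 <= 2 ^ l.+2.-1 by rewrite /= expnS; have := expn_gt0 2 l.+1; lia.
    lia.
  by [].
set mid := lo + (hi - lo)./2.
have lm : lo <= mid by rewrite /mid leq_addr.
have mh : mid <= hi by rewrite /mid; have := half_facts (hi - lo); lia.
have lm' : mid - lo < hi - lo by rewrite /mid; have := half_facts (hi - lo); lia.
have mh' : hi - mid < hi - lo.
  rewrite /mid; have : 0 < (hi - lo)./2 by case: (hi - lo) T2 => [|[|u]].
  lia.
pose rL x := rc P x lo mid.
pose rR x := rc P x mid hi.
have rLR x : rc P x lo hi = rL x + rR x by apply: rc_split; rewrite lm mh.
have Pin x y : P x y -> lo <= y < mid -> 0 < rL x by move=> p yi; exact: sum_ex_pos yi p.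
have Pin' x y : P x y -> mid <= y < hi -> 0 < rR x by move=> p yi; exact: sum_ex_pos yi p.
set A' := k.-1 * 8 ^ l.+1.-1.
have eA : k.-1 * 8 ^ l.+2.-1 = 8 * A' by rewrite /A' /= expnS mulnCA.
pose PL x y := P x y && (rR x == 0).
have hL : nzr PL rb lo mid * s ^ 2 <= 8 * A' * (mid - lo) ^ 2.
  rewrite -eA; apply: (IHt lo mid rb s PL) => //; first by lia.
  - move=> x y /andP[p /eqP r0]; have := Pb x y p => /andP[a b].
    rewrite a /=; rewrite ltnNge; apply/negP => my.
    by have := Pin' x y p; rewrite my b => /(_ isT); rewrite -/(rR x) r0.
  - move=> x; rewrite /PL rc_cond; case: eqP => // r0 hp.
    by have := Ps x; rewrite rLR r0 addn0; apply.
  - by move=> g; apply: ng; apply: grid_sub g => x y /andP[].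
pose PR x y := P x y && (rL x == 0).
have hR : nzr PR rb mid hi * s ^ 2 <= 8 * A' * (hi - mid) ^ 2.
  rewrite -eA; apply: (IHt mid hi rb s PR) => //; first by lia.
  - move=> x y /andP[p /eqP r0]; have := Pb x y p => /andP[a b].
    rewrite b andbT; rewrite leqNgt; apply/negP => my.
    by have := Pin x y p; rewrite my a => /(_ isT); rewrite -/(rL x) r0.
  - move=> x; rewrite /PR rc_cond; case: eqP => // r0 hp.
    by have := Ps x; rewrite rLR r0 add0n; apply.
  - by move=> g; apply: ng; apply: grid_sub g => x y /andP[].
set s' := s - s./2.
have ss' : s ^ 2 <= 4 * s' ^ 2 by exact: sq_half.
have s2' : 2 ^ l.+1.-1 <= s'.
  move: s2; rewrite /s' /= expnS => h; have := half_facts s; lia.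
pose cXL x := (0 < rR x) && (s <= (rL x).*2).
pose PXL x y := (y < mid) && (P x y && cXL x).
have hXL : nzr PXL rb lo mid * s' ^ 2 <= A' * (mid - lo) ^ 2.
  apply: (IHl' (mid - lo) lo mid rb s' PXL) => //.
  - move=> x y /andP[ym /andP[p _]]; have := Pb x y p => /andP[a _]; by rewrite a ym.
  - move=> x; have -> : rc PXL x lo mid = rc (fun x y => P x y && cXL x) x lo mid.
      by apply: eq_big_nat => i /andP[_ hh]; rewrite /PXL hh.
    rewrite rc_cond; case: (boolP (cXL x)) => // /andP[_ hs] _.
    exact: half_ceil_le.
  - move=> g; apply: ng; apply: (grid_app (P':=PXL) (h:=mid) (Y:=hi)) => //.
    move=> x y /andP[ym /andP[p /andP[hr _]]]; split=> //.
    have [y' [yi py]] := sum_pos_ex hr.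
    by exists y'; case/andP: yi => a b; split.
pose cXR x := (0 < rL x) && (s <= (rR x).*2).
pose PXR x y := (mid <= y) && (P x y && cXR x).
have hXR : nzr PXR rb mid hi * s' ^ 2 <= A' * (hi - mid) ^ 2.
  apply: (IHl' (hi - mid) mid hi rb s' PXR) => //.
  - move=> x y /andP[ym /andP[p _]]; have := Pb x y p => /andP[_ b]; by rewrite b ym.
  - move=> x; have -> : rc PXR x mid hi = rc (fun x y => P x y && cXR x) x mid hi.
      by apply: eq_big_nat => i /andP[hh _]; rewrite /PXR hh.
    rewrite rc_cond; case: (boolP (cXR x)) => // /andP[_ hs] _.
    exact: half_ceil_le.
  - move=> g; apply: ng; apply: (grid_pre (P':=PXR) (h:=mid)) => //.
    move=> x y /andP[ym /andP[p /andP[hr _]]]; split=> //.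
    have [y' [yi py]] := sum_pos_ex hr.
    by exists y'; case/andP: yi => a b; split.
have cover : nzr P rb lo hi <= nzr PL rb lo mid + nzr PR rb mid hi
                              + nzr PXL rb lo mid + nzr PXR rb mid hi.
  rewrite /nzr -!big_split /=; apply: leq_sum => x _.
  have eXL : rc PXL x lo mid = rc (fun x y => P x y && cXL x) x lo mid.
    by apply: eq_big_nat => i /andP[_ hh]; rewrite /PXL hh.
  have eXR : rc PXR x mid hi = rc (fun x y => P x y && cXR x) x mid hi.
    by apply: eq_big_nat => i /andP[hh _]; rewrite /PXR hh.
  rewrite eXL eXR /PL /PR !rc_cond -/(rL x) -/(rR x) /cXL /cXR.
  have := Ps x; rewrite rLR.
  move: (rL x) (rR x) => u w; exact: cover_arith.
have H3 := halves_ineq T2.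
have emid : mid - lo = (hi - lo)./2 by rewrite /mid addKn.
have ehm : hi - mid = hi - lo - (hi - lo)./2 by rewrite /mid subnDA.
rewrite emid ehm in hL hR hXL hXR.
rewrite eA.
have e1 : nzr P rb lo hi * s ^ 2 <= (nzr PL rb lo mid + nzr PR rb mid hi
                              + nzr PXL rb lo mid + nzr PXR rb mid hi) * s ^ 2.
  by rewrite leq_mul2r cover orbT.
apply: (leq_trans e1).
exact: final_arith hL hR hXL hXR ss' H3.
Qed.

End W.

Definition cnt (P : nat -> nat -> bool) n := \sum_(0 <= x < n) \sum_(0 <= y < n) (P x y : nat).

Lemma sum_ext_zero (F : nat -> nat) n m : n <= m -> (forall x, n <= x -> F x = 0) ->
  \sum_(0 <= x < n) F x = \sum_(0 <= x < m) F x.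
Proof.
move=> nm Fz; rewrite (big_cat_nat (leq0n n) nm) /=.
by rewrite [X in _ = _ + X]big1_seq ?addn0 // => i /andP[_]; rewrite mem_index_iota => /andP[a _]; apply: Fz.
Qed.

Lemma sum_blocks_mul (F : nat -> nat) R t :
  \sum_(0 <= x < R * t) F x = \sum_(0 <= X < R) \sum_(0 <= i < t) F (X * t + i).
Proof.
elim: R => [|R IH]; first by rewrite mul0n !big_geq.
rewrite big_nat_recr //= -IH mulSn addnC.
rewrite (big_cat_nat (n := R * t)) //=; last by rewrite leq_addr.
congr (_ + _).
rewrite -{1}[R * t]add0n big_addn addKn.
by apply: eq_bigr => i _; rewrite addnC.
Qed.

Lemma sum_blocks (F : nat -> nat) n R t : n <= R * t -> (forall x, n <= x -> F x = 0) ->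
  \sum_(0 <= x < n) F x = \sum_(0 <= X < R) \sum_(0 <= i < t) F (X * t + i).
Proof. by move=> h Fz; rewrite (sum_ext_zero h Fz) sum_blocks_mul. Qed.

Section Blocks.
Variables (P : nat -> nat -> bool) (t : nat).

Definition blk X Y := has (fun i => has (fun j => P (X * t + i) (Y * t + j)) (iota 0 t)) (iota 0 t).
Definition cw X Y j := has (fun i => P (X * t + i) (Y * t + j)) (iota 0 t).
Definition wd X Y := \sum_(0 <= j < t) (cw X Y j : nat).
Definition ones X Y := \sum_(0 <= i < t) \sum_(0 <= j < t) (P (X * t + i) (Y * t + j) : nat).

Lemma cnt_blocks n R : (forall x y, P x y -> x < n /\ y < n) -> n <= R * t ->
  cnt P n = \sum_(0 <= X < R) \sum_(0 <= Y < R) ones X Y.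
Proof.
move=> Pb nR; rewrite /cnt.
rewrite (sum_blocks nR); last first.
  move=> x nx; rewrite big1 // => y _; case: (boolP (P x y)) => // /Pb [a _]; lia.
apply: eq_bigr => X _.
rewrite /ones.
transitivity (\sum_(0 <= i < t) \sum_(0 <= Y < R) \sum_(0 <= j < t) (P (X * t + i) (Y * t + j) : nat)).
  apply: eq_bigr => i _; rewrite (sum_blocks nR) //.
  move=> y ny; case: (boolP (P (X * t + i) y)) => // /Pb [_ b]; lia.
by rewrite exchange_big_nat.
Qed.

End Blocks.

Lemma leq_sum_nat_in m n (F G : nat -> nat) : (forall i, m <= i < n -> F i <= G i) ->
  \sum_(m <= i < n) F i <= \sum_(m <= i < n) G i.
Proof.
move=> H; rewrite big_nat_cond [X in _ <= X]big_nat_cond; apply: leq_sum => i /andP[h _]; exact: H.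
Qed.

Lemma sum_pos_ex_nat (F : nat -> nat) m n :
  0 < \sum_(m <= y < n) F y -> exists y, m <= y < n /\ 0 < F y.
Proof.
case: (boolP (has (fun y => 0 < F y) (index_iota m n))) => [/hasP [y yin Fy]|/hasPn H].
  by exists y; rewrite -mem_index_iota.
rewrite big1_seq // => y /andP[_ yin]; have := H y yin; by case: (F y).
Qed.

Lemma has_iota (p : pred nat) j t : j < t -> p j -> has p (iota 0 t).
Proof. by move=> jt pj; apply/hasP; exists j; rewrite // mem_iota. Qed.

Definition ht P t X Y := wd (trP P) t Y X.

Lemma ones_le_wh P t X Y : ones P t X Y <= ht P t X Y * wd P t X Y.
Proof.
rewrite /ht /wd /ones big_distrlr /=.
apply: leq_sum_nat_in => i /andP[_ it]; apply: leq_sum_nat_in => j /andP[_ jt].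
case: (boolP (P (X * t + i) (Y * t + j))) => // p.
rewrite /cw /trP (@has_iota _ j) ?(@has_iota _ i) //.
Qed.

Lemma ones_le_t2 P t X Y : ones P t X Y <= t ^ 2.
Proof.
rewrite /ones; apply: (@leq_trans (\sum_(0 <= i < t) \sum_(0 <= j < t) 1)).
  apply: leq_sum => i _; apply: leq_sum => j _; by case: (P _ _).
by rewrite !sum_nat_const_nat subn0 muln1.
Qed.

Lemma ones_blk P t X Y : 0 < ones P t X Y -> blk P t X Y.
Proof.
move=> /sum_pos_ex_nat [i [/andP[_ it] /sum_pos_ex [j [/andP[_ jt] p]]]].
by rewrite /blk (@has_iota _ i) // (@has_iota _ j).
Qed.

Lemma ones_bound P t s X Y :
  ones P t X Y <= (s.-1) ^ 2 * blk P t X Y + t ^ 2 * (s <= wd P t X Y) + t ^ 2 * (s <= ht P t X Y).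
Proof.
have [w|w] := leqP s (wd P t X Y).
  by rewrite muln1; apply: leq_trans (ones_le_t2 _ _ _ _) _; lia.
have [h|h] := leqP s (ht P t X Y).
  by rewrite muln1; apply: leq_trans (ones_le_t2 _ _ _ _) _; lia.
rewrite !muln0 !addn0.
case: (posnP (ones P t X Y)) => [->//|op].
rewrite (ones_blk op) muln1.
apply: (leq_trans (ones_le_wh _ _ _ _)).
have h1 : ht P t X Y <= s.-1 by lia.
have h2 : wd P t X Y <= s.-1 by lia.
by rewrite expnS expn1; apply: leq_mul.
Qed.

Lemma wide_count k (P : nat -> nat -> bool) t s Y R :
  0 < k -> t = s * 2 ^ k.+1 -> 2 ^ k.-1 <= s -> ~ grid k k P ->
  \sum_(0 <= X < R) (s <= wd P t X Y : nat) <= (k.-1 * 8 ^ k.-1) * 4 ^ k.+1.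
Proof.
move=> k0 et s2 ng.
have s0 : 0 < s by apply: leq_trans s2; rewrite expn_gt0.
pose Q X y := (s <= wd P t X Y) && ((Y * t <= y < Y * t + t) && has (fun i => P (X * t + i) y) (iota 0 t)).
have erc X : rc Q X (Y * t) (Y * t + t) = if s <= wd P t X Y then wd P t X Y else 0.
  rewrite /rc /Q; case: (s <= wd P t X Y) => /=; last by rewrite big1.
  rewrite (eq_big_nat _ _ (F2 := fun y => (has (fun i => P (X * t + i) y) (iota 0 t) : nat))); last first.
    by move=> y ->.
  rewrite -{1}[Y * t]add0n big_addn addKn /wd; apply: eq_bigr => j _.
  by rewrite /cw addnC.
have enz : nzr Q R (Y * t) (Y * t + t) = \sum_(0 <= X < R) (s <= wd P t X Y : nat).
  rewrite /nzr; apply: eq_bigr => X _; rewrite erc.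
  by case: (boolP (s <= wd P t X Y)) => h //=; rewrite (leq_trans s0 h).
have HW := @W_main k k k0 t (Y * t) (Y * t + t) R s Q.
rewrite addKn leqnn in HW.
have := HW isT.
rewrite enz.
move=> /(_ _ _ s2) H.
have H' : (\sum_(0 <= X < R) (s <= wd P t X Y : nat)) * s ^ 2 <=
          (k.-1 * 8 ^ k.-1 * 4 ^ k.+1) * s ^ 2.
  apply: (leq_trans (H _ _ _)).
  - by move=> x y /andP[_ /andP[h _]].
  - by move=> X; rewrite erc; case: (boolP (s <= wd P t X Y)).
  - move=> g; apply: ng; apply: (grid_lift (u := fun X => X * t) (v := id)) g.
    + by move=> a b ab; rewrite leq_mul2r ab orbT.
    + by [].
    + move=> X y /andP[_ /andP[_ /hasP [i]]]; rewrite mem_iota => /andP[_ it] p.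
      exists (X * t + i), y; split=> //=; last by rewrite ltnSn leqnn.
      by rewrite leq_addr /= mulSn addnC ltn_add2r; rewrite add0n in it.
  - have e : t ^ 2 = 4 ^ k.+1 * s ^ 2.
      by rewrite et expnMn mulnC -expnM [k.+1 * 2]mulnC expnM.
    by rewrite e mulnA.
by rewrite leq_pmul2r ?expn_gt0 ?s0 in H'.
Qed.

Lemma cnt_le_sq P n : cnt P n <= n * n.
Proof.
rewrite /cnt; apply: (@leq_trans (\sum_(0 <= x < n) n)).
  apply: leq_sum => x _; apply: leq_trans (sum_bool_le _ _ _) _; by rewrite subn0.
by rewrite sum_nat_const_nat subn0.
Qed.

Definition N0 k := (k.-1 * 8 ^ k.-1) * 4 ^ k.+1.
Definition Ck k := 8 * 4 ^ k * N0 k + 4 ^ k.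

Lemma final_arith2 c R W T t N n s1 :
  c <= (8 * t * N + t) * R -> W <= R * N -> T <= R * N -> 4 * s1 <= t -> R * t <= 2 * n ->
  s1 * c + t * t * W + t * t * T <= (8 * t * N + t) * n.
Proof.
move=> h1 h2 h3 h4 h5.
set B := 8 * t * N + t in h1 *.
have a1 : 2 * (s1 * c) <= B * n.
  have e1 : 4 * (s1 * c) <= t * (B * R) by rewrite mulnA leq_mul.
  have e2 : t * (B * R) <= 2 * (B * n).
    have -> : t * (B * R) = B * (R * t) by rewrite mulnCA [t * R]mulnC.
    by rewrite [X in _ <= X]mulnCA leq_mul2l h5 orbT.
  lia.
have a2 : t * t * W <= 2 * (t * N * n).
  apply: (@leq_trans (t * t * (R * N))); first by rewrite leq_mul2l h2 orbT.
  have -> : t * t * (R * N) = (t * N) * (R * t) by nia.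
  by rewrite [X in _ <= X]mulnCA leq_mul2l h5 orbT.
have a3 : t * t * T <= 2 * (t * N * n).
  apply: (@leq_trans (t * t * (R * N))); first by rewrite leq_mul2l h3 orbT.
  have -> : t * t * (R * N) = (t * N) * (R * t) by nia.
  by rewrite [X in _ <= X]mulnCA leq_mul2l h5 orbT.
have a4 : 8 * (t * N * n) <= B * n by rewrite /B !mulnA leq_mul2r leq_addr orbT.
lia.
Qed.

Lemma pow_facts k : 0 < k ->
  [/\ 4 <= 4 ^ k, 4 ^ k = 2 ^ k.-1 * 2 ^ k.+1 & 4 * (2 ^ k.-1).-1 ^ 2 <= 4 ^ k].
Proof.
case: k => [//|k] _ /=.
have e4 : 4 ^ k.+1 = 2 ^ k * 2 ^ k.+2.
  by rewrite -expnD -[4]/(2 ^ 2) -expnM; congr (_ ^ _); lia.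
split=> //.
- by rewrite expnS; have := expn_gt0 4 k; lia.
- have h : (2 ^ k).-1 ^ 2 <= (2 ^ k) ^ 2 by rewrite leq_exp2r // leq_pred.
  have -> : 4 ^ k.+1 = 4 * (2 ^ k) ^ 2.
    by rewrite expnS; congr (_ * _); rewrite -[4 ^ k]/((2 ^ 2) ^ k) -!expnM mulnC.
  by rewrite leq_mul2l h orbT.
Qed.

Lemma MT k : 0 < k -> forall n (P : nat -> nat -> bool),
  (forall x y, P x y -> x < n /\ y < n) -> ~ grid k k P -> cnt P n <= Ck k * n.
Proof.
move=> k0; elim/ltn_ind => n IH P Pb ng.
have [t4 et st] := pow_facts k0.
set t := 4 ^ k in t4 et st *.
set s := 2 ^ k.-1 in et st *.
have [nt|nt] := leqP n t.
  apply: (leq_trans (cnt_le_sq P n)); rewrite leq_mul2r; apply/orP; right.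
  by apply: leq_trans nt _; rewrite /Ck leq_addl.
set R := n %/ t + 1.
have dE := divn_eq n t.
have mlt : n %% t < t by rewrite ltn_mod; lia.
have nR : n <= R * t by rewrite /R mulnDl mul1n {1}dE leq_add2l ltnW.
have Rt2 : R * t <= 2 * n by rewrite /R mulnDl mul1n; lia.
have Rn : R < n.
  rewrite /R; have : n %/ t * 4 <= n %/ t * t by rewrite leq_mul2l t4 orbT.
  lia.
have Bb : forall X Y, blk P t X Y -> X < R /\ Y < R.
  move=> X Y /hasP [i]; rewrite mem_iota => /andP[_ it] /hasP [j]; rewrite mem_iota => /andP[_ jt] p.
  have [a b] := Pb _ _ p.
  have ltR : forall Z, Z * t < n -> Z < R.
    move=> Z Zn; rewrite ltnNge; apply/negP => RZ.
    have : R * t <= Z * t by rewrite leq_mul2r RZ orbT.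
    lia.
  by split; apply: ltR; lia.
have ngB : ~ grid k k (blk P t).
  move=> g; apply: ng; apply: (grid_lift (u := fun X => X * t) (v := fun Y => Y * t)) g.
  - by move=> a b ab; rewrite leq_mul2r ab orbT.
  - by move=> a b ab; rewrite leq_mul2r ab orbT.
  - move=> X Y /hasP [i]; rewrite mem_iota => /andP[_ it] /hasP [j]; rewrite mem_iota => /andP[_ jt] p.
    exists (X * t + i), (Y * t + j); split=> //; rewrite leq_addr /= mulSn addnC ltn_add2r.
    + by rewrite add0n in it.
    + by rewrite add0n in jt.
have IHB := IH R Rn (blk P t) Bb ngB.
have wideB : \sum_(0 <= X < R) \sum_(0 <= Y < R) (s <= wd P t X Y : nat) <= R * N0 k.
  rewrite exchange_big_nat /=.
  apply: (@leq_trans (\sum_(0 <= Y < R) N0 k)); last by rewrite sum_nat_const_nat subn0.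
  apply: leq_sum => Y _; exact: wide_count.
have tallB : \sum_(0 <= X < R) \sum_(0 <= Y < R) (s <= ht P t X Y : nat) <= R * N0 k.
  apply: (@leq_trans (\sum_(0 <= X < R) N0 k)); last by rewrite sum_nat_const_nat subn0.
  apply: leq_sum => X _; rewrite /ht; apply: wide_count => //.
  by move=> g; apply: ng; have := grid_tr g.
have step : cnt P n <= (s.-1) ^ 2 * cnt (blk P t) R
     + t ^ 2 * \sum_(0 <= X < R) \sum_(0 <= Y < R) (s <= wd P t X Y : nat)
     + t ^ 2 * \sum_(0 <= X < R) \sum_(0 <= Y < R) (s <= ht P t X Y : nat).
  rewrite (cnt_blocks Pb nR) /cnt !big_distrr -!big_split /=.
  apply: leq_sum => X _; rewrite !big_distrr -!big_split /=.
  apply: leq_sum => Y _; exact: ones_bound.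
apply: (leq_trans step).
rewrite /Ck -/t -!mulnn in IHB st *.
exact: final_arith2 IHB wideB tallB st Rt2.
Qed.

Section Mat.
Variables (n : nat) (M : 'M[bool]_n).

Lemma horizontal_mono a b c e a' b' c' e' :
  a' <= a -> b <= b' -> c' <= c -> e <= e' ->
  horizontal M a' b' c' e' -> horizontal M a b c e.
Proof.
move=> h1 h2 h3 h4 /forallP H; apply/forallP => x; apply/forallP => x'; apply/forallP => y.
apply/implyP => /andP[/andP[/andP[p1 p2] /andP[p3 p4]] /andP[/andP[q1 q2] _]].
have := H x; move=> /forallP /(_ x') /forallP /(_ y) /implyP; apply.
rewrite /in_block; apply/andP; split; apply/andP; split; apply/andP; split; lia.
Qed.

Lemma vertical_mono a b c e a' b' c' e' :
  a' <= a -> b <= b' -> c' <= c -> e <= e' ->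
  vertical M a' b' c' e' -> vertical M a b c e.
Proof.
move=> h1 h2 h3 h4 /forallP H; apply/forallP => x; apply/forallP => y; apply/forallP => y'.
apply/implyP => /andP[/andP[/andP[p1 p2] /andP[p3 p4]] /andP[_ /andP[q1 q2]]].
have := H x; move=> /forallP /(_ y) /forallP /(_ y') /implyP; apply.
rewrite /in_block; apply/andP; split; apply/andP; split; apply/andP; split; lia.
Qed.

Lemma mixed_mono a b c e a' b' c' e' :
  a' <= a -> b <= b' -> c' <= c -> e <= e' ->
  mixed M a b c e -> mixed M a' b' c' e'.
Proof.
move=> h1 h2 h3 h4 /andP[H V]; apply/andP; split.
- by apply: contra H; apply: horizontal_mono.
- by apply: contra V; apply: vertical_mono.
Qed.

Definition cornerP x y := [&& x.+1 < n, y.+1 < n & mixed M x x.+2 y y.+2].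

End Mat.

Lemma sorted_iota_f (f : nat -> nat) m :
  (forall i, i < m -> f i < f i.+1) -> sorted ltn (map f (iota 0 m.+1)).
Proof.
move=> H.
suff : forall r a, (forall i, a <= i < a + r -> f i < f i.+1) -> sorted ltn (map f (iota a r.+1)).
  by move=> /(_ m 0); apply => i /andP[_ h]; apply: H.
elim=> [|r IH] a Hr //=.
apply/andP; split.
- apply: Hr; lia.
- have := IH a.+1; rewrite /=; apply => i hi; apply: Hr; lia.
Qed.

Lemma part_of (xs : seq nat) n d : 0 < d -> size xs = (2 * d).+1 ->
  (forall i, i < 2 * d -> exists x, nth 0 xs i <= x < nth 0 xs i.+1 /\ x.+1 < n) ->
  let f i := if i == 0 then 0 else if i == d then n else nth 0 xs (2 * i) in
  interval_partition n d (map f (iota 0 d.+1)) /\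
  forall i x, i < d -> nth 0 xs (2 * i) <= x < nth 0 xs (2 * i).+1 ->
     nth 0 (map f (iota 0 d.+1)) i <= x /\ x.+2 <= nth 0 (map f (iota 0 d.+1)) i.+1.
Proof.
move=> d0 sx H f.
have A i : i < d -> f i <= nth 0 xs (2 * i).
  rewrite /f; case: eqP => // _; case: eqP => // -> ; by rewrite ltnn.
have B i : i < d -> nth 0 xs (2 * i).+1 < f i.+1.
  move=> id; rewrite /f /=; case: eqP => [ed|nd].
  - have [x [/andP[a b] c]] := H (2 * i).+1 ltac:(lia).
    lia.
  - have [x [/andP[a b] c]] := H (2 * i).+1 ltac:(lia).
    have -> : 2 * i.+1 = (2 * i).+2 by lia.
    lia.
have C i : i < d -> nth 0 xs (2 * i) < nth 0 xs (2 * i).+1.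
  move=> id; have [x [/andP[a b] c]] := H (2 * i) ltac:(lia); lia.
have nthf i : i <= d -> nth 0 (map f (iota 0 d.+1)) i = f i.
  by move=> id; rewrite (nth_map 0) ?size_iota ?nth_iota.
split; last first.
  move=> i x id /andP[a b]; rewrite !nthf; try lia.
  have := A i id; have := B i id; lia.
apply/and4P; split.
- by rewrite size_map size_iota.
- rewrite -(subnn 0) -/(index_iota 0 0) /index_iota subn0.
  apply: sorted_iota_f => i id.
  have := A i id; have := B i id; have := C i id.
  rewrite /f; case: (i.+1 =P 0) => // _; lia.
- by rewrite /= /f eqxx.
- rewrite -(nth_last 0) size_map size_iota /= nthf //.
  by rewrite /f; case: (d =P 0) => [e|_]; [lia | rewrite eqxx].
Qed.


Lemma grid_mixed n (M : 'M[bool]_n) d : 0 < d ->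
  grid (2 * d) (2 * d) (cornerP M) -> has_mixed_division M d.
Proof.
move=> d0 [xs [ys [sx sy G]]].
have d2 : 0 < 2 * d by lia.
have Hx i : i < 2 * d -> exists x, nth 0 xs i <= x < nth 0 xs i.+1 /\ x.+1 < n.
  move=> id; have [x [y [a _ /and3P[c _ _]]]] := G i 0 id d2; by exists x.
have Hy j : j < 2 * d -> exists y, nth 0 ys j <= y < nth 0 ys j.+1 /\ y.+1 < n.
  move=> jd; have [x [y [_ a /and3P[_ c _]]]] := G 0 j d2 jd; by exists y.
have [px mx] := part_of d0 sx Hx.
have [py my] := part_of d0 sy Hy.
eexists; eexists; split; [exact: px | exact: py |].
move=> i j id jd.
have [x [y [hx hy /and3P[_ _ c]]]] := G (2 * i) (2 * j) ltac:(lia) ltac:(lia).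
have [a b] := mx i x id hx; have [a' b'] := my j y jd hy.
exact: mixed_mono a b a' b' c.
Qed.

Lemma max_interval (Q : nat -> bool) bnd x : Q x -> ~~ Q bnd -> x < bnd ->
  exists a b, [/\ a <= x < b, b <= bnd, (forall z, a <= z < b -> Q z),
                  (a == 0) || ~~ Q a.-1 & ~~ Q b].
Proof.
move=> Qx Qb xb.
have exb : exists z, (x <= z) && ~~ Q z by exists bnd; rewrite Qb ltnW.
case: (ex_minnP exb) => b /andP[xb' nQb] bmin.
have exa : exists a, (a <= x) && all Q (iota a (x.+1 - a)).
  by exists x; rewrite leqnn subSnn /= Qx.
case: (ex_minnP exa) => a /andP[ax allQ] amin.
have Qab z : a <= z < b -> Q z.
  move=> /andP[az zb]; have [zx|xz] := leqP z x.
    by move/allP: allQ; apply; rewrite mem_iota; lia.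
  case: (boolP (Q z)) => // nQ.
  have := bmin z; rewrite nQ andbT => /(_ (ltnW xz)); lia.
have xltb : x < b.
  rewrite ltn_neqAle xb' andbT; apply/eqP => e; by rewrite -e Qx in nQb.
exists a, b; split => //.
- by rewrite ax xltb.
- by apply: bmin; rewrite Qb ltnW.
- case: a amin ax allQ Qab => [//|a] amin ax allQ Qab /=.
  apply/negP => Qa.
  have := amin a; rewrite (ltnW ax) /=.
  have -> : x.+1 - a = (x.+1 - a.+1).+1 by lia.
  by rewrite /= Qa allQ => /(_ isT); rewrite ltnn.
Qed.

Lemma interval_unique (Q : nat -> bool) a b a' b' x :
  (forall z, a <= z < b -> Q z) -> (a == 0) || ~~ Q a.-1 -> ~~ Q b ->
  (forall z, a' <= z < b' -> Q z) -> (a' == 0) || ~~ Q a'.-1 -> ~~ Q b' ->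
  a <= x < b -> a' <= x < b' -> a = a' /\ b = b'.
Proof.
move=> H1 H2 H3 H1' H2' H3' hx hx'.
have ea : a = a'.
  have [h|h|//] := ltngtP a a'.
  - move: H2'; case: eqP => [e|_ /= /negP []]; first lia.
    apply: H1; lia.
  - move: H2; case: eqP => [e|_ /= /negP []]; first lia.
    apply: H1'; lia.
split => //.
have [h|h|//] := ltngtP b b'.
- by move/negP: H3; case; apply: H1'; lia.
- by move/negP: H3'; case; apply: H1; lia.
Qed.

Lemma propag (u v : nat -> bool) lo hi :
  (forall y, lo <= y < hi ->
     ~~ (((u y != v y) || (u y.+1 != v y.+1)) && ((u y != u y.+1) || (v y != v y.+1)))) ->
  forall z0, lo <= z0 <= hi -> u z0 != v z0 -> forall z, lo <= z <= hi -> v z = v z0.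
Proof.
move=> H z0 hz0 nz0.
have up y : lo <= y < hi -> u y != v y -> (u y.+1 != v y.+1) && (v y.+1 == v y).
  move=> hy; move: (H y hy).
  by case: (u y); case: (v y); case: (u y.+1); case: (v y.+1).
have down y : lo <= y < hi -> u y.+1 != v y.+1 -> (u y != v y) && (v y == v y.+1).
  move=> hy; move: (H y hy).
  by case: (u y); case: (v y); case: (u y.+1); case: (v y.+1).
have U m : z0 + m <= hi -> (u (z0 + m) != v (z0 + m)) && (v (z0 + m) == v z0).
  elim: m => [|m IH] hm; first by rewrite addn0 nz0 eqxx.
  have /andP[a b] := IH ltac:(lia).
  have /andP[c d] := up (z0 + m) ltac:(lia) a.
  by rewrite addnS c /= (eqP d) b.
have D m : lo + m <= z0 -> (u (z0 - m) != v (z0 - m)) && (v (z0 - m) == v z0).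
  elim: m => [|m IH] hm; first by rewrite subn0 nz0 eqxx.
  have /andP[a b] := IH ltac:(lia).
  have e : (z0 - m.+1).+1 = z0 - m by lia.
  have /andP[c d] : (u (z0 - m.+1) != v (z0 - m.+1)) && (v (z0 - m.+1) == v (z0 - m.+1).+1).
    by apply: down; [lia | rewrite e].
  by rewrite c /= (eqP d) e.
move=> z hz; have [zz|zz] := leqP z0 z.
- have := U (z - z0) ltac:(lia); rewrite subnKC //; by case/andP => _ /eqP.
- have := D (z0 - z) ltac:(lia); rewrite subKn ?(ltnW zz) //; by case/andP => _ /eqP.
Qed.

Section Decomp.
Variables (n : nat) (M : 'M[bool]_n).

Definition Mf (x y : nat) : bool :=
  match (insub x : option 'I_n), (insub y : option 'I_n) with
  | Some i, Some j => M i j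
  | _, _ => false
  end.

Lemma Mf_ord (i j : 'I_n) : Mf i j = M i j.
Proof. by rewrite /Mf !valK. Qed.

Lemma Mf_outx x y : n <= x -> Mf x y = false.
Proof. by move=> h; rewrite /Mf insubN // -leqNgt. Qed.

Lemma Mf_outy x y : n <= y -> Mf x y = false.
Proof.
move=> h; rewrite /Mf.
have -> : (insub y : option 'I_n) = None by rewrite insubN // -leqNgt.
by case: insub.
Qed.

Lemma Mf_in x y : Mf x y -> x < n /\ y < n.
Proof.
move=> h; split; rewrite ltnNge; apply/negP => h'.
- by rewrite Mf_outx in h.
- by rewrite Mf_outy in h.
Qed.

Lemma corner_of x y : x.+1 < n -> y.+1 < n ->
  (Mf x y != Mf x.+1 y) || (Mf x y.+1 != Mf x.+1 y.+1) ->
  (Mf x y != Mf x y.+1) || (Mf x.+1 y != Mf x.+1 y.+1) -> cornerP M x y.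
Proof.
move=> xn yn c1 c2.
have px : x < n by lia. have py : y < n by lia.
pose ox := Ordinal px; pose ox1 := Ordinal xn; pose oy := Ordinal py; pose oy1 := Ordinal yn.
have e1 : Mf x y = M ox oy by rewrite -Mf_ord.
have e2 : Mf x.+1 y = M ox1 oy by rewrite -Mf_ord.
have e3 : Mf x y.+1 = M ox oy1 by rewrite -Mf_ord.
have e4 : Mf x.+1 y.+1 = M ox1 oy1 by rewrite -Mf_ord.
rewrite /cornerP xn yn /mixed /=.
have ib a b : in_block x x.+2 y y.+2 a b = [&& x <= a < x.+2 & y <= b < y.+2] by [].
apply/andP; split.
- apply/negP => /forallP H.
  move: c1; rewrite e1 e2 e3 e4 => /orP[] /negP; apply.
  + have := H ox => /forallP /(_ ox1) /forallP /(_ oy) /implyP; apply.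
    by rewrite /in_block /= !(leqnn, ltnS, leqnSn).
  + have := H ox => /forallP /(_ ox1) /forallP /(_ oy1) /implyP; apply.
    by rewrite /in_block /= !(leqnn, ltnS, leqnSn).
- apply/negP => /forallP H.
  move: c2; rewrite e1 e2 e3 e4 => /orP[] /negP; apply.
  + have := H ox => /forallP /(_ oy) /forallP /(_ oy1) /implyP; apply.
    by rewrite /in_block /= !(leqnn, ltnS, leqnSn).
  + have := H ox1 => /forallP /(_ oy) /forallP /(_ oy1) /implyP; apply.
    by rewrite /in_block /= !(leqnn, ltnS, leqnSn).
Qed.

Definition isrun x c e := [&& c < e, e <= n, all (fun y => Mf x y) (iota c (e - c)),
                              (c == 0) || ~~ Mf x c.-1 & ~~ Mf x e].

Lemma isrunP x c e : isrun x c e ->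
  [/\ c < e, e <= n, (forall z, c <= z < e -> Mf x z), (c == 0) || ~~ Mf x c.-1 & ~~ Mf x e].
Proof.
case/and5P => a b /allP h d f; split => // z hz; apply: h; rewrite mem_iota; lia.
Qed.

Lemma isrun_n c e : isrun n c e = false.
Proof.
apply/negP => /isrunP [a _ h _ _]; have := h c; rewrite Mf_outx // leqnn a => /(_ isT).
by [].
Qed.

Definition maxrect (r : rect) : bool :=
  let: ((a, b), (c, e)) := r in
  [&& a < b, b <= n, all (fun x => isrun x c e) (iota a (b - a)),
      (a == 0) || ~~ isrun a.-1 c e & ~~ isrun b c e].

Lemma maxrectP a b c e : maxrect ((a, b), (c, e)) ->
  [/\ a < b, b <= n, (forall z, a <= z < b -> isrun z c e),
      (a == 0) || ~~ isrun a.-1 c e & ~~ isrun b c e].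
Proof.
case/and5P => h1 h2 /allP h d f; split => // z hz; apply: h; rewrite mem_iota; lia.
Qed.

Lemma same_rect a b c e a' b' c' e' x y :
  maxrect ((a, b), (c, e)) -> maxrect ((a', b'), (c', e')) ->
  a <= x < b -> c <= y < e -> a' <= x < b' -> c' <= y < e' ->
  ((a, b), (c, e)) = ((a', b'), (c', e')).
Proof.
move=> /maxrectP [h1 h2 h3 h4 h5] /maxrectP [h1' h2' h3' h4' h5'] hx hy hx' hy'.
have [r1 r1'] := (h3 x hx, h3' x hx').
have [_ _ k1 k2 k3] := isrunP r1; have [_ _ k1' k2' k3'] := isrunP r1'.
have [ec ee] := interval_unique k1 k2 k3 k1' k2' k3' hy hy'.
subst c' e'.
have [ea eb] := interval_unique h3 h4 h5 h3' h4' h5' hx hx'.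
by subst.
Qed.


Lemma corner_exists a c e : 0 < a -> a < n -> isrun a c e -> ~~ isrun a.-1 c e ->
  ~~ ((c == 0) && (e == n)) -> exists y, c.-1 <= y < e /\ cornerP M a.-1 y.
Proof.
move=> a0 an ra nra nex.
have [ce en hv hc he] := isrunP ra.
set lo := c.-1; set hi := minn e n.-1.
case: (boolP (has (fun y => cornerP M a.-1 y) (iota lo (hi - lo)))).
  move=> /hasP [y]; rewrite mem_iota => hy cy; exists y; split => //; lia.
move=> /hasPn Hn.
have ea : a.-1.+1 = a by rewrite prednK.
have Hw : forall y, lo <= y < hi ->
   ~~ (((Mf a.-1 y != Mf a y) || (Mf a.-1 y.+1 != Mf a y.+1)) &&
       ((Mf a.-1 y != Mf a.-1 y.+1) || (Mf a y != Mf a y.+1))).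
  move=> y hy; apply/negP => /andP[c1 c2].
  have := Hn y; rewrite mem_iota => /(_ ltac:(lia)) /negP; apply.
  apply: corner_of; rewrite ?ea //; lia.
have D : forall z, lo <= z <= hi -> Mf a.-1 z = Mf a z.
  move=> z0 hz0; apply/eqP; apply/negPn/negP => neq.
  have P := propag Hw hz0 neq.
  have vc : Mf a c by apply: hv; lia.
  have Pc := P c ltac:(lia).
  case: (posnP c) => [c0|cp].
  - have e0 : e < n.
      rewrite ltn_neqAle en andbT; apply/negP => /eqP ee.
      by move: nex; rewrite c0 ee !eqxx.
    have := P e ltac:(lia); rewrite (negbTE he) -Pc vc.
    by [].
  - have := P c.-1 ltac:(lia); move: hc; rewrite (gtn_eqF cp) /= => /negbTE ->.
    by rewrite -Pc vc.
exfalso; move/negP: nra; apply.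
apply/and5P; split => //.
- apply/allP => z; rewrite mem_iota => hz; rewrite D; last by lia.
  apply: hv; lia.
- case: (posnP c) => [->//|cp]; rewrite /= D; last by lia.
  by move: hc; rewrite (gtn_eqF cp).
- have [e0|e0] := ltnP e n.
  + by rewrite D //; lia.
  + by rewrite Mf_outy.
Qed.

End Decomp.

Section Decomp2.
Variables (n : nat) (M : 'M[bool]_n).

Definition T4 := (('I_n.+1 * 'I_n.+1) * ('I_n.+1 * 'I_n.+1))%type.
Definition conv (p : T4) : rect := ((val p.1.1, val p.1.2), (val p.2.1, val p.2.2)).

Lemma conv_inj : injective conv.
Proof.
move=> [[a b] [c e]] [[a' b'] [c' e']] [] /val_inj -> /val_inj -> /val_inj -> /val_inj ->.
by [].
Qed.

Definition Rs := [seq r <- map conv (enum {: T4}) | maxrect M r].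

Lemma uniq_Rs : uniq Rs.
Proof. by rewrite filter_uniq // map_inj_uniq ?enum_uniq //; exact: conv_inj. Qed.

Lemma maxrect_bounds a b c e : maxrect M ((a, b), (c, e)) ->
  [/\ a < b, b <= n, c < e & e <= n].
Proof.
move=> /maxrectP [h1 h2 h3 _ _]; have := h3 a; rewrite leqnn h1 => /(_ isT) /isrunP [? ? _ _ _].
by split.
Qed.

Lemma mem_Rs r : (r \in Rs) = maxrect M r.
Proof.
rewrite mem_filter; case: (boolP (maxrect M r)) => //= mr.
case: r mr => [[a b] [c e]] mr.
have [h1 h2 h3 h4] := maxrect_bounds mr.
apply/mapP; exists ((inord a, inord b), (inord c, inord e)); first by rewrite mem_enum.
by rewrite /conv /= !inordK //; lia.
Qed.

Lemma decomp : rect_decomposition M Rs.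
Proof.
split.
- exact: uniq_Rs.
- move=> [[a b] [c e]]; rewrite mem_Rs => mr.
  have [h1 h2 h3 h4] := maxrect_bounds mr.
  split; first by rewrite /rect_valid h1 h2 h3 h4.
  move=> x y; rewrite /in_rect /in_block => /andP[hx hy].
  have [_ _ H _ _] := maxrectP mr.
  have [_ _ H' _ _] := isrunP (H x hx).
  by rewrite -Mf_ord; apply: H'.
- move=> [[a b] [c e]] [[a' b'] [c' e']]; rewrite !mem_Rs => mr mr' ne x y.
  apply/negP; rewrite /in_rect /in_block => /andP[/andP[hx hy] /andP[hx' hy']].
  by move/negP: ne; apply; apply/eqP; apply: same_rect mr mr' hx hy hx' hy'.
- move=> x y; split.
  + move=> Mxy.
    have Mf1 : Mf M x y by rewrite Mf_ord.
    have [c [e [hy en H hc he]]] := max_interval Mf1 (negbT (Mf_outy M x (leqnn n))) (ltn_ord y).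
    have rx : isrun M x c e.
      apply/and5P; split => //; first lia.
      by apply/allP => z; rewrite mem_iota => hz; apply: H; lia.
    have [a [b [hx bn H' ha hb]]] := @max_interval (fun z => isrun M z c e) n x rx (negbT (isrun_n M c e)) (ltn_ord x).
    exists ((a, b), (c, e)); last by rewrite /in_rect /in_block hx hy.
    rewrite mem_Rs; apply/and5P; split => //; first lia.
    by apply/allP => z; rewrite mem_iota => hz; apply: H'; lia.
  + move=> [[[a b] [c e]]]; rewrite mem_Rs => mr.
    rewrite /in_rect /in_block => /andP[hx hy].
    have [_ _ H _ _] := maxrectP mr.
    have [_ _ H' _ _] := isrunP (H x hx).
    by rewrite -Mf_ord; apply: H'.
Qed.

End Decomp2.

Section Count.
Variables (n : nat) (M : 'M[bool]_n).

Definition cy a c e := nth 0 [seq y <- iota c.-1 (e - c.-1) | cornerP M a.-1 y] 0.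

Lemma cy_spec a c e : 0 < a -> a < n -> isrun M a c e -> ~~ isrun M a.-1 c e ->
  ~~ ((c == 0) && (e == n)) -> c.-1 <= cy a c e < e /\ cornerP M a.-1 (cy a c e).
Proof.
move=> a0 an ra nra nex.
have [y [hy cy']] := corner_exists a0 an ra nra nex.
have [ce _ _ _ _] := isrunP ra.
set s := [seq y <- iota c.-1 (e - c.-1) | cornerP M a.-1 y].
have ys : y \in s by rewrite mem_filter cy' mem_iota; lia.
have hin : cy a c e \in s.
  rewrite /cy -/s; apply: mem_nth; rewrite lt0n size_eq0; apply/negP => /eqP s0.
  by rewrite s0 in ys.
move: hin; rewrite /s mem_filter mem_iota => /andP[cc h]; split => //; lia.
Qed.

Definition ch (r : rect) : nat * nat :=
  let: ((a, b), (c, e)) := r in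
  if a == 0 then (0, c) else if (c == 0) && (e == n) then (a, 0) else (a, cy a c e).

Definition Tl := [seq (0, c) | c <- iota 0 n] ++ [seq (a, 0) | a <- iota 0 n] ++
  flatten [seq [seq (x.+1, y) | y <- [seq y <- iota 0 n | cornerP M x y]] | x <- iota 0 n].

Lemma size_Tl : size Tl = n + n + cnt (cornerP M) n.
Proof.
rewrite /Tl !size_cat !size_map size_iota addnA; congr (_ + _).
rewrite size_flatten /shape -map_comp sumnE big_map /cnt.
rewrite (_ : iota 0 n = index_iota 0 n); last by rewrite /index_iota subn0.
apply: eq_bigr => x _; by rewrite /= size_map size_filter sum_count.
Qed.

Lemma top_facts a b c e : maxrect M ((a, b), (c, e)) ->
  [/\ a < b, b <= n, isrun M a c e & (a == 0) || ~~ isrun M a.-1 c e].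
Proof.
move=> /maxrectP [h1 h2 h3 h4 _]; split => //; apply: h3; by rewrite leqnn h1.
Qed.

Lemma ch_in r : r \in Rs M -> ch r \in Tl.
Proof.
case: r => [[a b] [c e]]; rewrite mem_Rs => mr.
have [h1 h2 ra ha] := top_facts mr.
have [ce en _ _ _] := isrunP ra.
rewrite /ch /Tl !mem_cat; case: (posnP a) => [a0|ap].
  by apply/orP; left; apply/mapP; exists c; rewrite ?mem_iota //; lia.
case: (boolP ((c == 0) && (e == n))) => ex.
  by apply/orP; right; apply/orP; left; apply/mapP; exists a; rewrite ?mem_iota //; lia.
move: ha; rewrite (gtn_eqF ap) /= => nra.
have [hy cc] := cy_spec ap ltac:(lia) ra nra ex.
apply/orP; right; apply/orP; right; apply/flattenP.
exists [seq (a.-1.+1, y) | y <- [seq y <- iota 0 n | cornerP M a.-1 y]].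
  by apply/mapP; exists a.-1; rewrite // mem_iota; lia.
rewrite prednK //; apply/mapP; exists (cy a c e) => //.
by rewrite mem_filter cc mem_iota /=; move: cc => /and3P[_ ? _]; lia.
Qed.

Lemma ch_inj : {in Rs M &, injective ch}.
Proof.
move=> [[a b] [c e]] [[a' b'] [c' e']]; rewrite !mem_Rs => mr mr'.
have [h1 h2 ra ha] := top_facts mr.
have [h1' h2' ra' ha'] := top_facts mr'.
move: ha ha'.
have [ce en hv _ he] := isrunP ra.
have [ce' en' hv' _ he'] := isrunP ra'.
have share : a = a' -> forall z, c <= z < e -> c' <= z < e' ->
    ((a, b), (c, e)) = ((a', b'), (c', e')).
  move=> ea z hz hz'; apply: (same_rect (x := a) (y := z)) mr mr' _ hz _ hz'.
  - by clear -h1; lia.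
  - by clear -h1' ea; lia.
rewrite /ch; case: (posnP a) => [a0|ap]; case: (posnP a') => [a0'|ap'] //=.
- move=> _ _ [] ec; apply: (share ltac:(clear -a0 a0'; lia) c).
  + by clear -ce; lia.
  + by clear -ce' ec; lia.
- by move=> _ _; case: ifP => _ /(congr1 fst) /=; clear -ap'; lia.
- by move=> _ _; case: ifP => _ /(congr1 fst) /=; clear -ap; lia.
move=> nra nra'.
case: (boolP ((c == 0) && (e == n))) => ex; case: (boolP ((c' == 0) && (e' == n))) => ex' E;
  have /= ea := congr1 fst E.
- apply: (share ea c'); move/andP: ex => [/eqP c0 /eqP e0]; clear -c0 e0 ce' en'; lia.
- apply: (share ea c'); move/andP: ex => [/eqP c0 /eqP e0]; clear -c0 e0 ce' en'; lia.
- apply: (share ea c); move/andP: ex' => [/eqP c0 /eqP e0]; clear -c0 e0 ce en; lia.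
have /= ey := congr1 snd E.
have aln : a < n by clear -h1 h2; lia.
have [hy _] := cy_spec ap aln ra nra ex.
subst a'.
have [hy' _] := cy_spec ap aln ra' nra' ex'.
rewrite -ey in hy'.
have [l1|l1] := leqP e c'.
  have : e != c'.
    apply/negP => /eqP ee; move/negP: he; apply; rewrite ee; apply: hv'.
    by clear -ce'; lia.
  by clear -l1 hy hy'; lia.
have [l2|l2] := leqP e' c.
  have : e' != c.
    apply/negP => /eqP ee; move/negP: he'; apply; rewrite ee; apply: hv.
    by clear -ce; lia.
  by clear -l2 hy hy'; lia.
by apply: (share erefl (maxn c c')); clear -l1 l2 ce ce'; lia.
Qed.

Lemma count_Rs : size (Rs M) <= cnt (cornerP M) n + n + n.
Proof.
rewrite -(size_map ch) (_ : cnt (cornerP M) n + n + n = size Tl); last by rewrite size_Tl; lia.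
apply: uniq_leq_size.
  by rewrite map_inj_in_uniq ?uniq_Rs //; exact: ch_inj.
move=> p /mapP [r rin ->]; exact: ch_in.
Qed.

End Count.

Lemma Ck_bound k : 0 < k -> Ck k + 2 <= 2 ^ (8 * k + 6).
Proof.
move=> k0.
have e8 x : 8 ^ x = 2 ^ (3 * x) by rewrite expnM.
have e4 x : 4 ^ x = 2 ^ (2 * x) by rewrite expnM.
have a : k.-1 <= 2 ^ k by apply: leq_trans (leq_pred k) (ltnW (ltn_expl k (ltnSn 1))).
have b : 8 ^ k.-1 <= 8 ^ k by apply: leq_pexp2l => //; exact: leq_pred.
have c : N0 k <= 2 ^ (6 * k + 2).
  rewrite /N0; apply: (@leq_trans (2 ^ k * 8 ^ k * 4 ^ k.+1)).
    by apply: leq_mul => //; apply: leq_mul.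
  rewrite e8 e4 -!expnD; apply: leq_pexp2l => //; lia.
have d : Ck k <= 2 ^ (8 * k + 5) + 2 ^ (2 * k).
  rewrite /Ck e4 leq_add2r.
  apply: (@leq_trans (2 ^ 3 * 2 ^ (2 * k) * 2 ^ (6 * k + 2))); first by rewrite leq_mul2l c orbT.
  by rewrite -!expnD; apply: leq_pexp2l => //; lia.
have f : 2 ^ (2 * k) <= 2 ^ (8 * k + 4) by apply: leq_pexp2l => //; lia.
have g : 2 <= 2 ^ (8 * k + 4) by rewrite -{1}(expn1 2); apply: leq_pexp2l => //; lia.
have h : 2 ^ (8 * k + 6) = 2 ^ (8 * k + 4) * 4 by rewrite -[4]/(2 ^ 2) -expnD -addnA.
have h' : 2 ^ (8 * k + 5) = 2 ^ (8 * k + 4) * 2 by rewrite [8 * k + 5]addnS expnS mulnC.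
lia.
Qed.

Theorem lemma6 :
  exists c : nat, forall (d n : nat) (M : 'M[bool]_n),
    0 < d -> mixed_free M d ->
    exists Rs : seq rect, rect_decomposition M Rs /\ size Rs <= 2 ^ (c * d) * n.
Proof.
exists 22 => d n M d0 mf.
exists (Rs M); split; first exact: decomp.
have k0 : 0 < 2 * d by lia.
have ng : ~ grid (2 * d) (2 * d) (cornerP M) by move=> g; apply: mf; exact: grid_mixed d0 g.
have Pb : forall x y, cornerP M x y -> x < n /\ y < n.
  by move=> x y /and3P[a b _]; split; lia.
have hc := MT k0 Pb ng.
apply: leq_trans (count_Rs M) _.
have hb := Ck_bound k0.
have e : 2 ^ (22 * d) = 2 ^ (8 * (2 * d) + 6) * 2 ^ (6 * d - 6).
  by rewrite -expnD; congr (_ ^ _); lia.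
have p : 1 <= 2 ^ (6 * d - 6) by rewrite expn_gt0.
apply: (@leq_trans ((Ck (2 * d) + 2) * n)); first by rewrite mulnDl; lia.
rewrite leq_mul2r; apply/orP; right.
by rewrite e; apply: leq_trans hb _; rewrite leq_pmulr.
Qed.
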